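(* Let $A=(a_0,\dots,a_{n-1})$ be an integer array with $|a_m-a_{m+1}|=1$ for all $0\le m<n-1$. Let $0\le k\le i<n$ and $x\in\mathbb{Z}$ satisfy $i-a_i+x<k\le i$. Then $\mathrm{FS}_A(k,x)=\mathrm{FS}_A(i,x)$.
   Context: For an integer array $A=(a_0,\dots,a_{n-1})$, $\mathrm{FS}_A(i,x)$, for $0\le i<n$ and $x\in\mathbb{Z}$, denotes the minimal index $j>i$ such that $a_j\le x$, and is $0$ if no such $j$ exists. *)

(* Defs.v *)
From Stdlib Require Import ZArith Arith Lia.
Open Scope Z_scope.

(* An integer array A = (a_0,...,a_{n-1}) is represented by its length n and
   a function a : nat -> Z (values at indices >= n are irrelevant). *)

Fixpoint fs_search (a : nat -> Z) (fuel j : nat) (x : Z) : nat :=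
  match fuel with
  | O => 0%nat
  | S f => if Z.leb (a j) x then j else fs_search a f (S j) x
  end.

(* FS_A(i,x): minimal index j > i (j < n) with a_j <= x, and 0 if none. *)
Definition FS (a : nat -> Z) (n i : nat) (x : Z) : nat :=
  fs_search a (n - S i) (S i) x.

Definition FS_spec (a : nat -> Z) (n i : nat) (x : Z) (j : nat) : Prop :=
  ((i < j < n)%nat /\ a j <= x /\ forall m, (i < m < j)%nat -> x < a m)
  \/ (j = 0%nat /\ forall m, (i < m < n)%nat -> x < a m).

(* Main.v *)
Require Import Defs.
From Stdlib Require Import ZArith Arith Lia.
Open Scope Z_scope.

Lemma lower_bound (a : nat -> Z) (n : nat)
  (Hstep : forall m : nat, (m + 1 < n)%nat -> Z.abs (a m - a (m + 1)%nat) = 1)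
  (i : nat) (Hin : (i < n)%nat) :
  forall d m, (m + d = i)%nat -> a i - Z.of_nat d <= a m.
Proof.
  induction d as [|d IH]; intros m Hm.
  - replace m with i by lia. simpl. lia.
  - assert (H1 := IH (S m) ltac:(lia)).
    assert (H2 := Hstep m ltac:(lia)).
    replace (m + 1)%nat with (S m) in H2 by lia. rewrite Nat2Z.inj_succ. lia.
Qed.

Lemma skip (a : nat -> Z) (n i : nat) (x : Z) (Hin : (i < n)%nat) :
  forall d k, (k + d = i)%nat -> (forall m, (k < m <= i)%nat -> x < a m) ->
  FS a n k x = FS a n i x.
Proof.
  induction d as [|d IH]; intros k Hk Hm.
  - subst. f_equal. lia.
  - unfold FS at 1.
    replace (n - S k)%nat with (S (n - S (S k))) by lia.
    simpl. destruct (Z.leb_spec (a (S k)) x).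
    + specialize (Hm (S k) ltac:(lia)). lia.
    + apply IH; [lia|]. intros m Hm'. apply Hm. lia.
Qed.

Theorem claim2 (a : nat -> Z) (n : nat)
  (Hstep : forall m : nat, (m + 1 < n)%nat -> Z.abs (a m - a (m + 1)%nat) = 1)
  (k i : nat) (x : Z)
  (Hki : (k <= i)%nat) (Hin : (i < n)%nat)
  (Hcond : Z.of_nat i - a i + x < Z.of_nat k) :
  FS a n k x = FS a n i x.
Proof.
  apply (skip a n i x Hin (i - k)%nat k ltac:(lia)).
  intros m Hm.
  assert (H := lower_bound a n Hstep i Hin (i - m)%nat m ltac:(lia)).
  rewrite Nat2Z.inj_sub in H by lia. lia.
Qed.
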